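(* Let $k\ge0$ be an integer and $a,b\in\mathbb{C}$ generic (with $b\neq\pm(\tfrac12+j)$ for integers $0\le j<k$, and no lower parameter below a nonpositive integer). Define the polynomial of degree $2k$ in $n$ $$Q_k^{(3)}(n;a;b)=\frac{4^k}{(\tfrac12+b)_k(\tfrac12-b)_k}\sum_{j=0}^{k}\frac{(-n)_j(\tfrac n2+\tfrac a2)_j(-k)_j}{j!}\,\bigl(\tfrac14-\tfrac k2+\tfrac b2-\tfrac n2+j\bigr)_{k-j}\bigl(\tfrac14-\tfrac k2-\tfrac b2-\tfrac n2+j\bigr)_{k-j},$$ i.e. $\frac{4^k(\frac14-\frac k2+\frac b2-\frac n2)_k(\frac14-\frac k2-\frac b2-\frac n2)_k}{(\frac12+b)_k(\frac12-b)_k}\,{}_3F_2\!\left[\begin{smallmatrix}-n,\ \frac n2+\frac a2,\ -k\\ \frac14-\frac k2+\frac b2-\frac n2,\ \frac14-\frac k2-\frac b2-\frac n2\end{smallmatrix}\big|1\right]$. Then, near $x=0$, $${}_3F_2\!\left[\begin{matrix}\tfrac a3,\ \tfrac13+\tfrac a3,\ \tfrac23+\tfrac a3\\ \tfrac34+\tfrac k2+\tfrac a2+\tfrac b2,\ \tfrac34+\tfrac k2+\tfrac a2-\tfrac b2\end{matrix}\,\Big|\,-\frac{27x}{(1-4x)^3}\right]=(1-4x)^a\sum_{n=0}^\infty\frac{(a)_n(\tfrac12-k-b)_n(\tfrac12-k+b)_n}{n!\,(\tfrac34+\tfrac k2+\tfrac a2+\tfrac b2)_n(\tfrac34+\tfrac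 k2+\tfrac a2-\tfrac b2)_n}\,Q_k^{(3)}(n;a;b)\,x^n.$$
   Context: $(c)_n$ denotes the Pochhammer symbol $c(c+1)\cdots(c+n-1)$, $(c)_0=1$; ${}_pF_q$ is the generalized hypergeometric series $\sum_n \frac{\prod(a_i)_n}{n!\prod(b_i)_n}x^n$. *)

(* Defs.v *)
From HB Require Import structures.
From mathcomp Require Import all_boot all_order all_algebra.
Set Implicit Arguments. Unset Strict Implicit. Unset Printing Implicit Defensive.
Import Order.TTheory GRing.Theory Num.Theory.
Local Open Scope ring_scope.

Section Defs.
Variable F : fieldType.

Definition poch (c : F) (n : nat) : F := \prod_(i < n) (c + i%:R).

Definition fps := nat -> F.

Definition fps_mul (f g : fps) : fps :=
  fun n => \sum_(i < n.+1) f i * g (n - i)%N.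

Definition fps_one : fps := fun n => if n == 0%N then 1 else 0.

Definition fps_pow (f : fps) (m : nat) : fps := iter m (fps_mul f) fps_one.

(* composition f(g(x)); meaningful (and used only) when g 0 = 0, in which
   case g^m has no terms below x^m, so the finite sum is the full coefficient *)
Definition fps_comp (f g : fps) : fps :=
  fun n => \sum_(m < n.+1) f m * fps_pow g m n.

(* the binomial series (1 - c x)^e = sum_j (-e)_j / j! (c x)^j *)
Definition fps_binom (e c : F) : fps :=
  fun j => poch (- e) j / (j`!)%:R * c ^+ j.

Definition F32 (a1 a2 a3 b1 b2 : F) : fps :=
  fun n => poch a1 n * poch a2 n * poch a3 n /
           ((n`!)%:R * poch b1 n * poch b2 n).

Definition fps_X (c : F) : fps := fun n => if n == 1%N then c else 0.

Definition Q3 (k n : nat) (a b : F) : F :=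
  4 ^+ k / (poch (1/2 + b) k * poch (1/2 - b) k) *
  \sum_(j < k.+1)
    poch (- n%:R) j * poch (n%:R / 2 + a / 2) j * poch (- k%:R) j / (j`!)%:R *
    poch (1/4 - k%:R/2 + b/2 - n%:R/2 + j%:R) (k - j) *
    poch (1/4 - k%:R/2 - b/2 - n%:R/2 + j%:R) (k - j).

End Defs.

(* Main.v *)
Require Import Defs.
From HB Require Import structures.
From mathcomp Require Import all_boot all_order all_algebra.
From mathcomp Require Import ring zify.
From Stdlib Require Import FunctionalExtensionality.
Import Order.TTheory GRing.Theory Num.Theory.
Local Open Scope ring_scope.
Set Implicit Arguments.
Unset Strict Implicit.

Lemma natf_nz (F : fieldType) (char0 : [pchar F] =i pred0) (n : nat) :
  (0 < n)%N -> n%:R != 0 :> F.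
Proof. by move=> hn; rewrite ((pcharf0P F).1 char0) -lt0n. Qed.

Ltac fld c := field; rewrite ?(natf_nz c) ?fact_gt0 //.

Lemma poch0 (F : fieldType) (c : F) : poch c 0 = 1.
Proof. by rewrite /poch big_ord0. Qed.

Lemma pochS (F : fieldType) (c : F) n : poch c n.+1 = poch c n * (c + n%:R).
Proof. by rewrite /poch big_ord_recr. Qed.

Lemma pochSl (F : fieldType) (c : F) n : poch c n.+1 = c * poch (c + 1) n.
Proof.
rewrite /poch big_ord_recl /= addr0; congr (_ * _).
by apply: eq_bigr => i _; rewrite /bump /= add1n; ring.
Qed.

Lemma poch_add (F : fieldType) (c : F) m n :
  poch c (m + n) = poch c m * poch (c + m%:R) n.
Proof.
elim: n => [|n IH]; first by rewrite addn0 poch0 mulr1.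
by rewrite addnS !pochS IH natrD mulrA addrA.
Qed.

Lemma poch_refl (F : fieldType) (x : F) N :
  poch x N = (-1) ^+ N * poch (1 - x - N%:R) N.
Proof.
elim: N x => [|N IH] x; first by rewrite !poch0 expr0 mulr1.
rewrite pochSl IH pochS exprS.
have -> : 1 - (x + 1) - N%:R = 1 - x - N.+1%:R by ring.
ring.
Qed.

Lemma poch_negnat (F : fieldType) (n j : nat) :
  poch (- n%:R : F) j = (-1) ^+ j * (n ^_ j)%:R.
Proof.
elim: j => [|j IH]; first by rewrite poch0 ffactn0 expr0 mulr1.
rewrite pochS IH ffactnSr exprS natrM.
case: (leqP j n) => hj.
  rewrite natrB //; ring.
rewrite ffact_small //; ring.
Qed.

Lemma sum_shrink (F : fieldType) (n m : nat) (f : nat -> F) :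
  (m <= n)%N -> (forall i, (m <= i)%N -> (i < n)%N -> f i = 0) ->
  \sum_(i < n) f i = \sum_(i < m) f i.
Proof.
move=> hmn hz; rewrite (big_ord_widen n f hmn) (bigID (fun i : 'I_n => (i < m)%N)) /=.
rewrite [X in _ + X]big1 ?addr0 // => i; rewrite -leqNgt => hi; exact: hz.
Qed.

Lemma pascal_sum (F : fieldType) n (g : nat -> F) :
  \sum_(m < n.+2) ('C(n.+1, m))%:R * g m =
  \sum_(m < n.+1) ('C(n, m))%:R * (g m + g m.+1).
Proof.
under [RHS]eq_bigr do rewrite mulrDr.
rewrite big_split /= big_ord_recl [in RHS]big_ord_recl /= !bin0.
under eq_bigr do rewrite binS natrD mulrDl.
rewrite big_split /= -addrA; congr (_ + _); congr (_ + _).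
by rewrite big_ord_recr /= bin_small // mul0r addr0.
Qed.

Lemma pascal_sumN (F : fieldType) n (g : nat -> F) :
  \sum_(m < n.+2) (-1) ^+ m * ('C(n.+1, m))%:R * g m =
  \sum_(m < n.+1) (-1) ^+ m * ('C(n, m))%:R * (g m - g m.+1).
Proof.
have := pascal_sum n (fun m => (-1) ^+ m * g m).
under eq_bigr do rewrite mulrCA mulrA.
move=> ->; apply: eq_bigr => i _; rewrite exprS; ring.
Qed.

Lemma vandermonde (F : fieldType) (x y : F) n :
  poch (x + y) n = \sum_(i < n.+1) ('C(n, i))%:R * (poch x i * poch y (n - i)).
Proof.
elim: n => [|n IH]; first by rewrite big_ord1 bin0 !poch0 mulr1 mul1r.
rewrite (pascal_sum n (fun i => poch x i * poch y (n.+1 - i))) pochS IH big_distrl /=; apply: eq_bigr => [[i hi]] _ /=.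
rewrite subSS subSn // !pochS natrB //; ring.
Qed.

Lemma chu (F : fieldType) j (b e : F) :
  \sum_(m < j.+1) (-1) ^+ m * ('C(j, m))%:R * (poch b m * poch (e + m%:R) (j - m))
  = poch (e - b) j.
Proof.
elim: j b e => [|j IH] b e; first by rewrite big_ord1 bin0 !poch0 expr0; ring.
rewrite (pascal_sumN j (fun m => poch b m * poch (e + m%:R) (j.+1 - m))).
transitivity ((e + j%:R) * \sum_(m < j.+1) (-1) ^+ m * ('C(j, m))%:R *
      (poch b m * poch (e + m%:R) (j - m))
   - b * \sum_(m < j.+1) (-1) ^+ m * ('C(j, m))%:R *
      (poch (b + 1) m * poch ((e + 1) + m%:R) (j - m))).
  rewrite !big_distrr -sumrB; apply: eq_bigr => [[i hi]] _ /=.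
  rewrite subSS subSn // pochS pochSl.
  have -> : e + i%:R + (j - i)%:R = e + j%:R by rewrite natrB //; ring.
  have -> : e + i.+1%:R = e + 1 + i%:R by ring.
  ring.
rewrite !IH pochS.
have -> : e + 1 - (b + 1) = e - b by ring.
ring.
Qed.

Lemma binCC n m i :
  ('C(n, m + i) * 'C(m + i, m) = 'C(n, m) * 'C(n - m, i))%N.
Proof.
case: (leqP (m + i) n) => h; last first.
  rewrite (bin_small h) mul0n; case: (leqP m n) => hm.
    by rewrite (@bin_small (n - m) i) ?muln0 //; lia.
  by rewrite bin_small.
apply/eqP; rewrite -(eqn_pmul2r (_ : 0 < m`! * i`! * (n - m - i)`!)%N); last first.
  by rewrite !muln_gt0 !fact_gt0.
have h1 : (m <= n)%N by apply: leq_trans h; exact: leq_addr.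
have f1 := bin_fact h.
have f2 := bin_fact (leq_addr i m); rewrite addKn in f2.
have f3 := bin_fact h1.
have f4 : (i <= n - m)%N by lia.
have f5 := bin_fact f4.
have L : ('C(n, m + i) * 'C(m + i, m) * (m`! * i`! * (n - m - i)`!) = n`!)%N.
  rewrite -f1 -f2 subnDA; ring.
have R : ('C(n, m) * 'C(n - m, i) * (m`! * i`! * (n - m - i)`!) = n`!)%N.
  rewrite -f3 -f5; ring.
by rewrite L R.
Qed.

Lemma sum_split_at (F : fieldType) (N m : nat) (f : nat -> F) : (m <= N)%N ->
  \sum_(j < N) f j = \sum_(j < m) f j + \sum_(i < N - m) f (m + i)%N.
Proof.
move=> h; rewrite -(big_mkord xpredT f) -(big_mkord xpredT f).
rewrite -(big_mkord xpredT (fun i => f (m + i)%N)).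
rewrite (big_cat_nat (leq0n m) h) /=; congr (_ + _).
rewrite -{1}(add0n m) big_addn.
by apply: eq_bigr => i _; rewrite addnC.
Qed.

Definition Pf (F : fieldType) n (a b d e : F) :=
  \sum_(m < n.+1) (-1) ^+ m * ('C(n, m))%:R *
    (poch a m * poch b m * poch (d + m%:R) (n - m) * poch (e + m%:R) (n - m)).
Definition Qf (F : fieldType) n (a b d e : F) :=
  \sum_(j < n.+1) ('C(n, j))%:R *
    (poch a j * poch (e - b) j * poch (d - a) (n - j) * poch (e + j%:R) (n - j)).

Lemma inner1 (F : fieldType) n j (b e : F) : (j <= n)%N ->
  \sum_(m < n.+1) (-1) ^+ m * ('C(j, m))%:R * (poch b m * poch (e + m%:R) (n - m))
  = poch (e + j%:R) (n - j) * poch (e - b) j.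
Proof.
move=> hj; rewrite (@sum_shrink _ _ j.+1 (fun m => (-1) ^+ m * ('C(j, m))%:R * (poch b m * poch (e + m%:R) (n - m)))) //; last first.
  by move=> i hi _; rewrite bin_small //; ring.
rewrite -chu big_distrr /=; apply: eq_bigr => [[i hi]] _ /=.
have -> : (n - i = (j - i) + (n - j))%N by lia.
rewrite poch_add.
have -> : e + i%:R + (j - i)%:R = e + j%:R by rewrite natrB //; ring.
ring.
Qed.

Lemma inner2 (F : fieldType) n m (a d : F) : (m <= n)%N ->
  \sum_(j < n.+1) ('C(n, j))%:R * ('C(j, m))%:R * (poch a j * poch (d - a) (n - j))
  = ('C(n, m))%:R * poch a m * poch (d + m%:R) (n - m).
Proof.
move=> hm; rewrite (@sum_split_at _ _ m (fun j => ('C(n, j))%:R * ('C(j, m))%:R * (poch a j * poch (d - a) (n - j)))); last by lia.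
rewrite big1 ?add0r; last by move=> [i hi] _ /=; rewrite (bin_small hi); ring.
have -> : (n.+1 - m = (n - m).+1)%N by lia.
have -> : d + m%:R = (a + m%:R) + (d - a) by ring.
rewrite vandermonde big_distrr /=; apply: eq_bigr => [[i hi]] _ /=.
rewrite -natrM binCC natrM poch_add.
have -> : (n - (m + i) = n - m - i)%N by lia.
ring.
Qed.

Lemma PQ (F : fieldType) n (a b d e : F) : Pf n a b d e = Qf n a b d e.
Proof.
rewrite /Pf /Qf.
transitivity (\sum_(m < n.+1) \sum_(j < n.+1)
   ((-1) ^+ m * ('C(n, j))%:R * ('C(j, m))%:R *
     (poch a j * poch (d - a) (n - j)) * (poch b m * poch (e + m%:R) (n - m)))).
  apply: eq_bigr => [[m hm]] _ /=.
  transitivity ((\sum_(j < n.+1) ('C(n, j))%:R * ('C(j, m))%:R *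
       (poch a j * poch (d - a) (n - j))) * ((-1) ^+ m * (poch b m * poch (e + m%:R) (n - m)))).
    rewrite inner2 //; ring.
  by rewrite big_distrl /=; apply: eq_bigr => j _; ring.
rewrite exchange_big /=; apply: eq_bigr => [[j hj]] _ /=.
transitivity (('C(n, j))%:R * (poch a j * poch (d - a) (n - j)) *
  \sum_(m < n.+1) (-1) ^+ m * ('C(j, m))%:R * (poch b m * poch (e + m%:R) (n - m))).
  by rewrite big_distrr /=; apply: eq_bigr => m _; ring.
rewrite inner1 //; ring.
Qed.

Lemma poch_reflE (F : fieldType) (x y : F) N :
  y = 1 - x - N%:R -> poch x N = (-1) ^+ N * poch y N.
Proof. by move=> ->; exact: poch_refl. Qed.

Lemma sign2 (F : fieldType) N : ((-1) ^+ N * (-1) ^+ N = 1 :> F).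
Proof. by rewrite -exprMn mulrNN mulr1 expr1n. Qed.

Lemma sheppard (F : fieldType) n (a b c d : F) :
  Pf n a b c d = \sum_(j < n.+1) (-1) ^+ j * ('C(n, j))%:R *
    (poch a j * poch (a + b - n%:R - c - d + 1) j * poch (c - a) (n - j)
       * poch (d - a) (n - j)).
Proof.
set s := a + b - n%:R - c - d + 1.
transitivity (Pf n a b d c).
  by apply: eq_bigr => i _; ring.
transitivity (Pf n a s (a - c - n%:R + 1) (a - d - n%:R + 1)); last first.
  apply: eq_bigr => [[j hj]] _ /=.
  rewrite (@poch_reflE _ (c - a) (a - c - n%:R + 1 + j%:R)); last by rewrite natrB //; ring.
  rewrite (@poch_reflE _ (d - a) (a - d - n%:R + 1 + j%:R)); last by rewrite natrB //; ring.
  have := sign2 F (n - j); move: ((-1) ^+ (n - j)) => t ht.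
  transitivity ((-1) ^+ j * ('C(n, j))%:R *
     (poch a j * poch s j * poch (a - c - n%:R + 1 + j%:R) (n - j) *
      poch (a - d - n%:R + 1 + j%:R) (n - j)) * (t * t)); first by rewrite ht mulr1.
  ring.
rewrite !PQ /Qf; apply: eq_bigr => [[j hj]] _ /=.
have -> : a - d - n%:R + 1 - s = c - b by rewrite /s; ring.
rewrite (@poch_reflE _ (a - c - n%:R + 1 - a) (c + j%:R)); last by rewrite natrB //; ring.
rewrite (@poch_reflE _ (a - d - n%:R + 1 + j%:R) (d - a)); last by rewrite natrB //; ring.
have := sign2 F (n - j); move: ((-1) ^+ (n - j)) => t ht.
transitivity (('C(n, j))%:R *
   (poch a j * poch (c - b) j * poch (d - a) (n - j) * poch (c + j%:R) (n - j)) * (t * t));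
  first by rewrite ht mulr1.
ring.
Qed.


Set Strict Implicit.
Definition qp {F : fieldType} (z : F) : {poly F} := (z ^+ 2)%:P - 'X.
Definition Tp {F : fieldType} (s : F) n := \prod_(i < n) qp (s + i%:R).
Definition Hp {F : fieldType} (s : F) n := \prod_(i < n) qp (s + i%:R / 2).

Lemma qpN {F : fieldType} (z : F) : qp (- z) = qp z.
Proof. by rewrite /qp sqrrN. Qed.

Lemma qp_eq {F : fieldType} (u v : F) : u = v \/ u = - v -> qp u = qp v.
Proof. by case=> ->; rewrite ?qpN. Qed.

Lemma qp_neq0 {F : fieldType} (z : F) : qp z != 0.
Proof. by rewrite /qp -oppr_eq0 opprB -size_poly_eq0 size_XsubC. Qed.

Lemma Tp_neq0 {F : fieldType} (s : F) n : Tp s n != 0.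
Proof. by apply/prodf_neq0 => i _; exact: qp_neq0. Qed.

Lemma Tp0 {F : fieldType} (s : F) : Tp s 0 = 1.
Proof. by rewrite /Tp big_ord0. Qed.
Lemma Hp0 {F : fieldType} (s : F) : Hp s 0 = 1.
Proof. by rewrite /Hp big_ord0. Qed.

Lemma TpS {F : fieldType} (s : F) n : Tp s n.+1 = Tp s n * qp (s + n%:R).
Proof. by rewrite /Tp big_ord_recr. Qed.
Lemma HpS {F : fieldType} (s : F) n : Hp s n.+1 = Hp s n * qp (s + n%:R / 2).
Proof. by rewrite /Hp big_ord_recr. Qed.

Lemma TpSl {F : fieldType} (s : F) n : Tp s n.+1 = qp s * Tp (s + 1) n.
Proof.
rewrite /Tp big_ord_recl /= addr0; congr (_ * _).
by apply: eq_bigr => i _; rewrite /bump /= add1n; congr qp; ring.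
Qed.

Lemma Tp_add {F : fieldType} (s : F) m n : Tp s (m + n) = Tp s m * Tp (s + m%:R) n.
Proof.
elim: n => [|n IH]; first by rewrite addn0 Tp0 mulr1.
by rewrite addnS !TpS IH mulrA; congr (_ * qp _); rewrite natrD addrA.
Qed.

Lemma Tp_rev {F : fieldType} (s : F) j : Tp s j = Tp (1 - s - j%:R) j.
Proof.
elim: j s => [|j IH] s; first by rewrite !Tp0.
rewrite TpSl IH TpS mulrC; congr (Tp _ _ * _).
  by ring.
by rewrite -qpN; congr qp; ring.
Qed.

Lemma ind2 (P : nat -> Prop) : P 0%N -> P 1%N -> (forall n, P n -> P n.+2) -> forall n, P n.
Proof.
move=> h0 h1 hs n; suff: P n /\ P n.+1 by case.
by elim: n => [|n [IH1 IH2]]; split => //; apply: hs.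
Qed.


Lemma B0 {F : fieldType} (char0 : [pchar F] =i pred0) k :
  Hp (1/4 : F) k = Tp (1/4 - k%:R/2) k.
Proof.
elim/ind2: k => [||K IH].
- by rewrite Hp0 Tp0.
- rewrite HpS TpS Hp0 Tp0 !mul1r; apply: qp_eq; right; fld char0.
rewrite !HpS TpSl TpS IH.
have -> : 1 / 4 - K.+2%:R / 2 + 1 = 1/4 - K%:R/2 :> F by fld char0.
rewrite (@qp_eq _ (1/4 + K%:R/2) (1 / 4 - K%:R / 2 + K%:R)); last by left; fld char0.
rewrite (@qp_eq _ (1/4 + K.+1%:R/2) (1 / 4 - K.+2%:R / 2)); last by right; fld char0.
ring.
Qed.

Lemma Tp1 {F : fieldType} (s : F) : Tp s 1 = qp s.
Proof. by rewrite TpS Tp0 mul1r addr0. Qed.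
Lemma Hp1 {F : fieldType} (s : F) : Hp s 1 = qp s.
Proof. by rewrite HpS Hp0 mul1r mul0r addr0. Qed.

Lemma B1 {F : fieldType} (char0 : [pchar F] =i pred0) k :
  qp (1/4 + k%:R/2 : F) * Hp (1/4) k = qp (1/4 - k%:R/2) * Tp (-1/4 - k%:R/2) k.
Proof.
elim/ind2: k => [||K IH].
- by rewrite Hp0 Tp0 !mulr1; apply: qp_eq; left; fld char0.
- rewrite Hp1 Tp1 mulrC; congr (_ * _); apply: qp_eq; right; fld char0.
rewrite !HpS TpSl TpS.
have -> : -1 / 4 - K.+2%:R / 2 + 1 = -1/4 - K%:R/2 :> F by fld char0.
transitivity (qp (1 / 4 + K.+2%:R / 2 : F) * qp (1 / 4 + K.+1%:R / 2) *
   (qp (1/4 + K%:R/2) * Hp (1/4) K)); first by ring.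
rewrite IH.
rewrite (@qp_eq _ (1/4 + K.+2%:R/2) (-1/4 - K.+2%:R/2)); last by right; fld char0.
rewrite (@qp_eq _ (1/4 + K.+1%:R/2) (1/4 - K.+2%:R/2)); last by right; fld char0.
rewrite (@qp_eq _ (1/4 - K%:R/2) (-1/4 - K%:R/2 + K%:R)); last by right; fld char0.
ring.
Qed.

Lemma W0 {F : fieldType} (char0 : [pchar F] =i pred0) k N :
  Tp (3/4 + k%:R/2 - N%:R/2 : F) N * Hp (1/4) k =
  Hp (1/4 - k%:R/2) N * Tp (1/4 - k%:R/2 - N%:R/2) k.
Proof.
elim/ind2: N => [||N IH].
- rewrite Tp0 Hp0 (mul1r (Hp _ _)) (mul1r (Tp _ _)) B0 //; congr Tp; fld char0.
- rewrite Tp1 Hp1.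
  have -> : 1 / 4 - k%:R / 2 - 1%:R / 2 = -1/4 - k%:R/2 :> F by fld char0.
  have -> : 3 / 4 + k%:R / 2 - 1%:R / 2 = 1/4 + k%:R/2 :> F by fld char0.
  by rewrite B1.
pose u0 : F := 3 / 4 + k%:R / 2 - N%:R / 2.
pose e0 : F := 1 / 4 - k%:R / 2 - N%:R / 2.
pose s : F := 1 / 4 - k%:R / 2.
have -> : 3 / 4 + k%:R / 2 - N.+2%:R / 2 = u0 - 1 by rewrite /u0; fld char0.
have -> : 1 / 4 - k%:R / 2 - N.+2%:R / 2 = e0 - 1 by rewrite /e0; fld char0.
apply: (mulIf (qp_neq0 (e0 - 1 + k%:R))).
rewrite -[in RHS]mulrA -TpS [in RHS]TpSl (_ : e0 - 1 + 1 = e0); last by ring.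
rewrite [in LHS]TpSl (_ : u0 - 1 + 1 = u0); last by ring.
rewrite [Tp u0 _.+1]TpS !HpS.
transitivity (qp (u0 - 1) * qp (u0 + N%:R) * qp (e0 - 1 + k%:R) *
   (Tp u0 N * Hp (1 / 4) k)); first by ring.
rewrite IH.
rewrite (@qp_eq _ (u0 - 1) (s + N%:R/2)); last by right; rewrite /u0 /s; fld char0.
rewrite (@qp_eq _ (u0 + N%:R) (e0 - 1)); last by right; rewrite /u0 /e0; fld char0.
rewrite (@qp_eq _ (e0 - 1 + k%:R) (s + N.+1%:R/2)); last by right; rewrite /e0 /s; fld char0.
ring.
Qed.

Lemma Wj {F : fieldType} (char0 : [pchar F] =i pred0) k N j :
  (j <= N)%N -> (j <= k)%N ->
  Tp (3/4 + k%:R/2 - N%:R/2 : F) (N - j) * Hp (1/4) k =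
  Hp (1/4 - k%:R/2) N * Tp (1/4 - k%:R/2 - N%:R/2 + j%:R) (k - j).
Proof.
move=> hjN hjk.
pose u0 : F := 3 / 4 + k%:R / 2 - N%:R / 2.
pose e0 : F := 1 / 4 - k%:R / 2 - N%:R / 2.
have h1 : Tp u0 N = Tp u0 (N - j) * Tp e0 j.
  rewrite -{1}(subnK hjN) Tp_add [Tp (u0 + _) j]Tp_rev; congr (_ * Tp _ _).
  rewrite /u0 /e0 natrB //; fld char0.
have h2 : Tp e0 k = Tp e0 j * Tp (e0 + j%:R) (k - j).
  by rewrite -Tp_add subnKC.
have := W0 char0 k N; rewrite -/u0 -/e0 h1 h2 => H.
apply: (mulIf (Tp_neq0 e0 j)).
transitivity (Tp u0 (N - j) * Tp e0 j * Hp (1 / 4) k); first by ring.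
rewrite H; ring.
Qed.

Lemma evalT {F : fieldType} (char0 : [pchar F] =i pred0) (s b : F) n :
  (Tp s n).[b ^+ 2 / 4] = poch (s + b / 2) n * poch (s - b / 2) n.
Proof.
elim: n => [|n IH]; first by rewrite Tp0 !poch0 hornerC mulr1.
rewrite TpS hornerM IH /qp hornerD hornerN hornerC hornerX !pochS; fld char0.
Qed.

Lemma evalH {F : fieldType} (char0 : [pchar F] =i pred0) (s b : F) n :
  4 ^+ n * (Hp s n).[b ^+ 2 / 4] = poch (2 * s + b) n * poch (2 * s - b) n.
Proof.
elim: n => [|n IH]; first by rewrite Hp0 !poch0 hornerC !mulr1.
rewrite HpS hornerM /qp hornerD hornerN hornerC hornerX !pochS exprS.
transitivity (4 * (4 ^+ n * (Hp s n).[b ^+ 2 / 4]) *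
  ((s + n%:R / 2) ^+ 2 - b ^+ 2 / 4)); first by ring.
rewrite IH; fld char0.
Qed.

Lemma WF {F : fieldType} (char0 : [pchar F] =i pred0) k N j (b : F) :
  (j <= N)%N -> (j <= k)%N ->
  let u0 := 3/4 + k%:R/2 - N%:R/2 in
  let e0 := 1/4 - k%:R/2 - N%:R/2 + j%:R in
  4 ^+ N * (poch (u0 + b/2) (N - j) * poch (u0 - b/2) (N - j)) *
    (poch (1/2 + b) k * poch (1/2 - b) k) =
  4 ^+ k * (poch (1/2 - k%:R - b) N * poch (1/2 - k%:R + b) N) *
    (poch (e0 + b/2) (k - j) * poch (e0 - b/2) (k - j)).
Proof.
move=> hjN hjk u0 e0.
have := congr1 (fun p => 4 ^+ N * 4 ^+ k * p.[b ^+ 2 / 4]) (@Wj _ char0 k N j hjN hjk).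
rewrite /= !hornerM !evalT //.
have HA : 4 ^+ k * (Hp (1/4 : F) k).[b ^+ 2 / 4] = poch (1/2 + b) k * poch (1/2 - b) k.
  by rewrite evalH //; congr (poch _ _ * poch _ _); fld char0.
have HB : 4 ^+ N * (Hp (1/4 - k%:R/2 : F) N).[b ^+ 2 / 4] =
    poch (1/2 - k%:R + b) N * poch (1/2 - k%:R - b) N.
  by rewrite evalH //; congr (poch _ _ * poch _ _); fld char0.
move=> H.
transitivity (4 ^+ N * (poch (u0 + b / 2) (N - j) * poch (u0 - b / 2) (N - j)) *
  (4 ^+ k * (Hp (1/4) k).[b ^+ 2 / 4])).
  by rewrite HA.
transitivity (4 ^+ N * 4 ^+ k * ((Hp (1 / 4 - k%:R / 2) N).[b ^+ 2 / 4] *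
    (poch (e0 + b / 2) (k - j) * poch (e0 - b / 2) (k - j)))).
  rewrite -H; ring.
transitivity (4 ^+ k * (4 ^+ N * (Hp (1 / 4 - k%:R / 2) N).[b ^+ 2 / 4]) *
    (poch (e0 + b / 2) (k - j) * poch (e0 - b / 2) (k - j))); first by ring.
rewrite HB; ring.
Qed.



Lemma fact_nz {F : fieldType} (char0 : [pchar F] =i pred0) n : (n`!)%:R != 0 :> F.
Proof. exact: (natf_nz char0 (fact_gt0 n)). Qed.

Lemma binom_fact {F : fieldType} (char0 : [pchar F] =i pred0) N i : (i <= N)%N ->
  1 / ((i`!)%:R * ((N - i)`!)%:R) = ('C(N, i))%:R / (N`!)%:R :> F.
Proof.
move=> h; rewrite -(bin_fact h) !natrM.
have := fact_nz char0 i; have := fact_nz char0 (N - i).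
have : ('C(N, i))%:R != 0 :> F by apply: natf_nz; rewrite // bin_gt0.
move=> ? ? ?; by field; do ?(apply/andP; split).
Qed.

Lemma BM {F : fieldType} (char0 : [pchar F] =i pred0) (e1 e2 c : F) N :
  \sum_(i < N.+1) fps_binom e1 c i * fps_binom e2 c (N - i)%N = fps_binom (e1 + e2) c N.
Proof.
rewrite /fps_binom (_ : - (e1 + e2) = - e1 + - e2); last by ring.
rewrite vandermonde big_distrl big_distrl /=; apply: eq_bigr => [[i hi]] _ /=.
have hb := @binom_fact _ char0 N i hi.
have h1 := fact_nz char0 i; have h2 := fact_nz char0 (N - i); have h3 := fact_nz char0 N.
have hc : c ^+ N = c ^+ i * c ^+ (N - i) by rewrite -exprD subnKC.
rewrite hc.
transitivity (poch (- e1) i * poch (- e2) (N - i) * (c ^+ i * c ^+ (N - i)) *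
  (1 / ((i`!)%:R * ((N - i)`!)%:R))); first by field; do ?(apply/andP; split).
rewrite hb; by field; do ?(apply/andP; split).
Qed.

Lemma tri_exchange {F : fieldType} n (G : nat -> nat -> F) :
  \sum_(i < n.+1) \sum_(m < (n - i)%N.+1) G i m =
  \sum_(m < n.+1) \sum_(i < (n - m)%N.+1) G i m.
Proof.
have E : forall (H : nat -> nat -> F) i, (i <= n)%N ->
  \sum_(m < (n - i)%N.+1) H i m = \sum_(m < n.+1) (if (i + m <= n)%N then H i m else 0).
  move=> H i hi; rewrite (@sum_shrink _ n.+1 (n - i).+1
      (fun m => if (i + m <= n)%N then H i m else 0)); last 2 first.
  - lia.
  - by move=> m hm _; case: ifP => //; lia.
  by apply: eq_bigr => [[m hm]] _ /=; case: ifP => //; lia.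
transitivity (\sum_(i < n.+1) \sum_(m < n.+1) (if (i + m <= n)%N then G i m else 0)).
  by apply: eq_bigr => [[i hi]] _ /=; rewrite E.
rewrite exchange_big /=; apply: eq_bigr => [[m hm]] _ /=.
rewrite (E (fun m i => G i m)) //; apply: eq_bigr => i _; by rewrite addnC.
Qed.

Lemma gval {F : fieldType} (n : nat) :
  fps_mul (fps_X (-27 : F)) (fps_binom (-3) 4) n =
  if n is n'.+1 then -27 * fps_binom (-3) 4 n' else 0.
Proof.
rewrite /fps_mul; case: n => [|n].
  by rewrite big_ord1 /fps_X /= mul0r.
rewrite big_ord_recl /fps_X /= mul0r add0r big_ord_recl /= subn1 /=.
rewrite big1 ?addr0 // => i _; by rewrite mul0r.
Qed.

Lemma binom0 {F : fieldType} (c : F) n :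
  fps_binom 0 c n = if n == 0%N then 1 else 0.
Proof.
rewrite /fps_binom oppr0; case: n => [|n]; first by rewrite poch0 expr0 mulr1 fact0 divr1.
by rewrite pochSl !mul0r.
Qed.

Lemma powg {F : fieldType} (char0 : [pchar F] =i pred0) m n :
  fps_pow (fps_mul (fps_X (-27 : F)) (fps_binom (-3) 4)) m n =
  if (m <= n)%N then (-27) ^+ m * fps_binom (- (3 * m%:R)) 4 (n - m)%N else 0.
Proof.
elim: m n => [|m IH] n.
  rewrite /fps_pow /= /fps_one expr0 mul1r subn0 (_ : - (3 * 0%:R) = 0 :> F); last by ring.
  by rewrite binom0.
rewrite /fps_pow iterS -/(fps_pow _ m).
set g := fps_mul (fps_X (-27 : F)) (fps_binom (-3) 4).
rewrite {1}/fps_mul.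
case: n => [|n].
  by rewrite big_ord1 /g gval mul0r.
rewrite big_ord_recl {1}/g gval mul0r add0r.
under eq_bigr => i _ do rewrite /g gval IH /= /bump /= add1n subSS add0n.
rewrite ltnS; case: (leqP m n) => hmn; last first.
  by rewrite big1 // => i _; case: ifP => h; [lia | rewrite mulr0].
rewrite (@sum_shrink _ n.+1 (n - m).+1 (fun i : nat =>
   -27 * fps_binom (-3) 4 i * (if (m <= n - i)%N
     then (-27) ^+ m * fps_binom (- (3 * m%:R)) 4 (n - i - m)%N else 0)));
  last 2 first.
- lia.
- by move=> i hi hin; case: ifP => h; [lia | rewrite mulr0].
transitivity ((-27 : F) ^+ m.+1 * \sum_(i < (n - m).+1)
  fps_binom (-3) 4 i * fps_binom (- (3 * m%:R)) 4 ((n - m) - i)%N).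
  rewrite big_distrr /=; apply: eq_bigr => [[i hi]] _ /=.
  rewrite ifT; last by lia.
  rewrite (_ : (n - i - m = n - m - i)%N); last by lia.
  rewrite exprS; ring.
rewrite BM // subSS; congr (_ * fps_binom _ _ _); ring.
Qed.

Lemma poch3 {F : fieldType} (x : F) : poch x 3 = x * (x + 1) * (x + 2).
Proof. rewrite !pochS poch0; ring. Qed.

Lemma trip {F : fieldType} (char0 : [pchar F] =i pred0) (a : F) m :
  27 ^+ m * (poch (a/3) m * poch (1/3 + a/3) m * poch (2/3 + a/3) m) = poch a (3 * m).
Proof.
elim: m => [|m IH]; first by rewrite ?muln0 !poch0 expr0; ring.
rewrite (_ : (3 * m.+1 = 3 * m + 3)%N); last by lia.
rewrite poch_add poch3 -IH !pochS exprS natrM; fld char0.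
Qed.

Lemma dup {F : fieldType} (char0 : [pchar F] =i pred0) (x : F) m :
  4 ^+ m * (poch (x/2) m * poch ((x + 1)/2) m) = poch x (2 * m).
Proof.
elim: m => [|m IH]; first by rewrite ?muln0 !poch0 expr0; ring.
rewrite (_ : (2 * m.+1 = 2 * m + 2)%N); last by lia.
rewrite poch_add !pochS poch0 -IH exprS natrM; fld char0.
Qed.

Lemma poch_neq0 {F : fieldType} (c : F) m :
  (forall i, (i < m)%N -> c + i%:R != 0) -> poch c m != 0.
Proof. by move=> h; apply/prodf_neq0 => i _; apply: h. Qed.

Lemma key_term {F : fieldType} (char0 : [pchar F] =i pred0) (k N j : nat) (a b : F)
  (hD : poch (1/2 + b) k * poch (1/2 - b) k != 0) :
  let c := 3/4 + k%:R/2 + a/2 + b/2 in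
  let d := 3/4 + k%:R/2 + a/2 - b/2 in
  let A := N%:R/2 + a/2 in
  4 ^+ N * ((-1) ^+ j * ('C(N, j))%:R *
    (poch A j * poch (- k%:R) j * poch (c - A) (N - j) * poch (d - A) (N - j)))
  = poch (1/2 - k%:R - b) N * poch (1/2 - k%:R + b) N *
    (4 ^+ k / (poch (1/2 + b) k * poch (1/2 - b) k) *
     (poch (- N%:R) j * poch (N%:R / 2 + a / 2) j * poch (- k%:R) j / (j`!)%:R *
      poch (1/4 - k%:R/2 + b/2 - N%:R/2 + j%:R) (k - j) *
      poch (1/4 - k%:R/2 - b/2 - N%:R/2 + j%:R) (k - j))).
Proof.
move=> c d A.
case: (leqP j N) => hjN; last first.
  rewrite bin_small // (poch_negnat F N j) (ffact_small hjN); ring.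
case: (leqP j k) => hjk; last first.
  rewrite (poch_negnat F k j) (ffact_small hjk); ring.
have hf : poch (- N%:R) j / (j`!)%:R = (-1) ^+ j * ('C(N, j))%:R :> F.
  rewrite poch_negnat -bin_ffact natrM.
  have := fact_nz char0 j => hj; field; done.
have W := @WF F char0 k N j b hjN hjk.
rewrite /= in W.
have -> : c - A = 3/4 + k%:R/2 - N%:R/2 + b/2 by rewrite /c /A; fld char0.
have -> : d - A = 3/4 + k%:R/2 - N%:R/2 - b/2 by rewrite /d /A; fld char0.
have -> : 1/4 - k%:R/2 + b/2 - N%:R/2 + j%:R = 1/4 - k%:R/2 - N%:R/2 + j%:R + b/2 :> F
  by fld char0.
have -> : 1/4 - k%:R/2 - b/2 - N%:R/2 + j%:R = 1/4 - k%:R/2 - N%:R/2 + j%:R - b/2 :> F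
  by fld char0.
apply: (mulIf hD).
transitivity ((-1) ^+ j * ('C(N, j))%:R * poch A j * poch (- k%:R) j *
  (4 ^+ N * (poch (3/4 + k%:R/2 - N%:R/2 + b/2) (N - j) *
             poch (3/4 + k%:R/2 - N%:R/2 - b/2) (N - j)) *
   (poch (1/2 + b) k * poch (1/2 - b) k))); first by ring.
rewrite W.
transitivity (poch (1/2 - k%:R - b) N * poch (1/2 - k%:R + b) N *
  (4 ^+ k * (poch (N%:R / 2 + a / 2) j * poch (- k%:R) j *
    (poch (- N%:R) j / (j`!)%:R) *
    poch (1/4 - k%:R/2 - N%:R/2 + j%:R + b/2) (k - j) *
    poch (1/4 - k%:R/2 - N%:R/2 + j%:R - b/2) (k - j)))); last first.
  have hj := fact_nz char0 j.
  move: hD; rewrite mulf_eq0 negb_or => /andP[hD1 hD2].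
  by field; do ?(apply/andP; split).
rewrite -hf /A; ring.
Qed.

Lemma key {F : fieldType} (char0 : [pchar F] =i pred0) (k N : nat) (a b : F)
  (hD : poch (1/2 + b) k * poch (1/2 - b) k != 0) :
  let c := 3/4 + k%:R/2 + a/2 + b/2 in
  let d := 3/4 + k%:R/2 + a/2 - b/2 in
  let A := N%:R/2 + a/2 in
  4 ^+ N * Pf N A (A + 1/2) c d =
  poch (1/2 - k%:R - b) N * poch (1/2 - k%:R + b) N * Q3 k N a b.
Proof.
move=> c d A.
rewrite sheppard.
have -> : A + (A + 1 / 2) - N%:R - c - d + 1 = - k%:R by rewrite /A /c /d; fld char0.
rewrite /Q3.
rewrite -(@sum_shrink _ (N + k).+1 N.+1 (fun j : nat => (-1) ^+ j * ('C(N, j))%:R *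
    (poch A j * poch (- k%:R) j * poch (c - A) (N - j) * poch (d - A) (N - j)))); last 2 first.
- lia.
- by move=> i hi _; rewrite bin_small //; ring.
rewrite -(@sum_shrink _ (N + k).+1 k.+1 (fun j : nat =>
    poch (- N%:R) j * poch (N%:R / 2 + a / 2) j * poch (- k%:R) j / (j`!)%:R *
      poch (1/4 - k%:R/2 + b/2 - N%:R/2 + j%:R) (k - j) *
      poch (1/4 - k%:R/2 - b/2 - N%:R/2 + j%:R) (k - j))); last 2 first.
- lia.
- by move=> i hi _; rewrite (poch_negnat F k i) (ffact_small hi); ring.
rewrite !big_distrr /=; apply: eq_bigr => j _.
by rewrite key_term.
Qed.

Lemma CI_term {F : fieldType} (char0 : [pchar F] =i pred0) (k N m : nat) (a b : F)
  (hc : forall i, 3/4 + k%:R/2 + a/2 + b/2 + i%:R != 0)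
  (hd : forall i, 3/4 + k%:R/2 + a/2 - b/2 + i%:R != 0) : (m <= N)%N ->
  let c := 3/4 + k%:R/2 + a/2 + b/2 in
  let d := 3/4 + k%:R/2 + a/2 - b/2 in
  let A := N%:R/2 + a/2 in
  F32 (a/3) (1/3 + a/3) (2/3 + a/3) c d m * (-27) ^+ m *
    fps_binom (- a - 3 * m%:R) 4 (N - m)%N =
  poch a N * 4 ^+ N / ((N`!)%:R * poch c N * poch d N) *
  ((-1) ^+ m * ('C(N, m))%:R *
   (poch A m * poch (A + 1/2) m * poch (c + m%:R) (N - m) * poch (d + m%:R) (N - m))).
Proof.
move=> hm c d A.
have nz : forall (x : F), (forall i, x + i%:R != 0) -> forall j, poch x j != 0.
  by move=> x hx j; apply: poch_neq0 => i _; apply: hx.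
have hcm := nz c hc m; have hdm := nz d hd m.
have hcm' : poch (c + m%:R) (N - m) != 0.
  by apply: nz => i; rewrite -addrA -natrD; exact: hc.
have hdm' : poch (d + m%:R) (N - m) != 0.
  by apply: nz => i; rewrite -addrA -natrD; exact: hd.
have f1 := fact_nz char0 m; have f2 := fact_nz char0 (N - m); have f3 := fact_nz char0 N.
set P3m := poch (a/3) m * poch (1/3 + a/3) m * poch (2/3 + a/3) m.
have E1 : poch a N * (4 ^+ m * (poch A m * poch (A + 1/2) m)) =
          27 ^+ m * P3m * poch (a + (3 * m)%:R) (N - m).
  have -> : A = (a + N%:R) / 2 by rewrite /A; fld char0.
  have -> : (a + N%:R) / 2 + 1/2 = (a + N%:R + 1) / 2 by fld char0.
  rewrite dup // -poch_add /P3m trip // -poch_add; congr poch; lia.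
have E2 := @binom_fact _ char0 N m hm.
have Ec : poch c N = poch c m * poch (c + m%:R) (N - m) by rewrite -poch_add subnKC.
have Ed : poch d N = poch d m * poch (d + m%:R) (N - m) by rewrite -poch_add subnKC.
have E4 : (4 : F) ^+ N = 4 ^+ m * 4 ^+ (N - m) by rewrite -exprD subnKC.
have E5 : (-27 : F) ^+ m = (-1) ^+ m * 27 ^+ m by rewrite -exprMn; congr (_ ^+ _); ring.
rewrite Ec Ed E4.
transitivity ((poch a N * (4 ^+ m * (poch A m * poch (A + 1 / 2) m))) * 4 ^+ (N - m) *
  (('C(N, m))%:R / (N`!)%:R) * (-1) ^+ m /
  (poch c m * poch d m)); last first.
  by field; do ?(apply/andP; split).
rewrite E1 -E2 /F32 /fps_binom E5.
have -> : - (- a - 3 * m%:R) = a + (3 * m)%:R by rewrite natrM; ring.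
rewrite -/P3m.
have h27 : (27 : F) ^+ m != 0 by rewrite expf_neq0 // (natf_nz char0).
by field; do ?(apply/andP; split).
Qed.

Lemma CI {F : fieldType} (char0 : [pchar F] =i pred0) (k N : nat) (a b : F)
  (hD : poch (1/2 + b) k * poch (1/2 - b) k != 0)
  (hc : forall i, 3/4 + k%:R/2 + a/2 + b/2 + i%:R != 0)
  (hd : forall i, 3/4 + k%:R/2 + a/2 - b/2 + i%:R != 0) :
  poch a N * poch (1/2 - k%:R - b) N * poch (1/2 - k%:R + b) N /
    ((N`!)%:R * poch (3/4 + k%:R/2 + a/2 + b/2) N
              * poch (3/4 + k%:R/2 + a/2 - b/2) N) * Q3 k N a b =
  \sum_(m < N.+1) F32 (a/3) (1/3 + a/3) (2/3 + a/3)
      (3/4 + k%:R/2 + a/2 + b/2) (3/4 + k%:R/2 + a/2 - b/2) m * (-27) ^+ m *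
    fps_binom (- a - 3 * m%:R) 4 (N - m)%N.
Proof.
under eq_bigr => m _ do rewrite (@CI_term _ char0 k N m a b hc hd (ltn_ord m)).
rewrite -big_distrr /=.
set c := 3/4 + k%:R/2 + a/2 + b/2.
set d := 3/4 + k%:R/2 + a/2 - b/2.
set A := N%:R/2 + a/2.
rewrite -/(Pf N A (A + 1/2) c d).
transitivity (poch a N / ((N`!)%:R * poch c N * poch d N) *
  (poch (1/2 - k%:R - b) N * poch (1/2 - k%:R + b) N * Q3 k N a b)); first by ring.
rewrite -(@key _ char0 k N a b hD) -/c -/d -/A; ring.
Qed.

Unset Implicit Arguments.

Theorem theorem2 (F : fieldType) (char0 : [pchar F] =i pred0)
    (k : nat) (a b : F)
    (hb : forall j : nat, (j < k)%N ->
            b != 1/2 + j%:R /\ b != - (1/2 + j%:R))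
    (hlow1 : forall m : nat, 3/4 + k%:R/2 + a/2 + b/2 != - m%:R)
    (hlow2 : forall m : nat, 3/4 + k%:R/2 + a/2 - b/2 != - m%:R) :
  fps_comp
    (F32 (a/3) (1/3 + a/3) (2/3 + a/3)
         (3/4 + k%:R/2 + a/2 + b/2) (3/4 + k%:R/2 + a/2 - b/2))
    (fps_mul (fps_X (- 27)) (fps_binom (-3) 4))
  =
  fps_mul (fps_binom a 4)
    (fun n => poch a n * poch (1/2 - k%:R - b) n * poch (1/2 - k%:R + b) n /
              ((n`!)%:R * poch (3/4 + k%:R/2 + a/2 + b/2) n
                        * poch (3/4 + k%:R/2 + a/2 - b/2) n)
              * Q3 k n a b).
Proof.
have hc : forall i, 3/4 + k%:R/2 + a/2 + b/2 + i%:R != 0.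
  by move=> i; rewrite addr_eq0 hlow1.
have hd : forall i, 3/4 + k%:R/2 + a/2 - b/2 + i%:R != 0.
  by move=> i; rewrite addr_eq0 hlow2.
have hD : poch (1/2 + b) k * poch (1/2 - b) k != 0.
  rewrite mulf_neq0 //; apply: poch_neq0 => i hi; have [h1 h2] := hb i hi.
    by rewrite (_ : 1/2 + b + i%:R = b - (- (1/2 + i%:R))) ?subr_eq0 //; ring.
  by rewrite (_ : 1/2 - b + i%:R = (1/2 + i%:R) - b) ?subr_eq0 1?eq_sym //; ring.
apply: functional_extensionality => n.
rewrite /fps_comp /fps_mul.
under [RHS]eq_bigr => i _ do rewrite (@CI _ char0 k (n - i)%N a b hD hc hd) big_distrr /=.
rewrite (tri_exchange n (fun i m => fps_binom a 4 i *
  (F32 (a/3) (1/3 + a/3) (2/3 + a/3)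
      (3/4 + k%:R/2 + a/2 + b/2) (3/4 + k%:R/2 + a/2 - b/2) m * (-27) ^+ m *
    fps_binom (- a - 3 * m%:R) 4 (n - i - m)%N))).
apply: eq_bigr => [[m hm]] _ /=.
rewrite -/(fps_mul (fps_X (-27)) (fps_binom (-3) 4)) (powg char0) ifT //.
transitivity (F32 (a/3) (1/3 + a/3) (2/3 + a/3)
      (3/4 + k%:R/2 + a/2 + b/2) (3/4 + k%:R/2 + a/2 - b/2) m * (-27) ^+ m *
   \sum_(i < (n - m)%N.+1) fps_binom a 4 i * fps_binom (- a - 3 * m%:R) 4 (n - m - i)%N);
  last first.
  rewrite big_distrr /=; apply: eq_bigr => i _.
  rewrite (_ : (n - i - m = n - m - i)%N); last by lia.
  ring.
rewrite (BM char0) (_ : a + (- a - 3 * m%:R) = - (3 * m%:R)); last by ring.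
ring.
Qed.
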